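(* Let $G$ be a finite two-player zero-sum game with finite pure strategy sets $S_1,S_2$ and payoffs $v_1=-v_2$, extended bilinearly to mixed strategies, and let $\epsilon\ge 0$. Consider RM-BR DO: populations $\Pi^t_1\subseteq S_1$, $\Pi^t_2\subseteq S_2$ are maintained, starting from nonempty $\Pi^0_i$; at iteration $t$ a restricted profile $\pi^t=(\pi^t_1,\pi^t_2)$ with $\pi^t_i\in\Delta(\Pi^t_i)$ is computed (by regret minimization of player $i$ over $\Pi^t_i$ against best responses of the unrestricted opponent), and then for each $i$ a pure best response of player $i$ to $\pi^t_{-i}$ is added, $\Pi^{t+1}_i=\Pi^t_i\cup\{\beta_i\}$. Assume that in each iteration enough inner-loop updates are run that the exploitability in each restricted game is at most $\epsilon$, i.e. for each $i$ and $t$, $$\min_{\sigma_{-i}\in\Delta(S_{-i})}v_i(\pi^t_i,\sigma_{-i})\ \ge\ \max_{\sigma_i\in\Delta(\Pi^t_i)}\min_{\sigma_{-i}\in\Delta(S_{-i})}v_i(\sigma_i,\sigma_{-i})-\epsilon .$$ Then the exploitability never increases by more than $2\epsilon$ from one iteration to the next: $e(\pi^{t+1})\le e(\pi^t)+2\epsilon$ for every $t$.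
   Context: $\Delta(X)$ denotes the set of mixed strategies supported on the set $X$ of pure strategies. The exploitability of a profile $\pi=(\pi_1,\pi_2)$ is $e(\pi)=\sum_{i\in\{1,2\}}\max_{\pi_i'}v_i(\pi_i',\pi_{-i})$, maximizing over all mixed strategies of player $i$ in the full game. A best response of player $i$ to $\pi_{-i}$ is a strategy maximizing $v_i(\cdot,\pi_{-i})$. *)

(* Defs.v *)
From HB Require Import structures.
From mathcomp Require Import all_boot all_order all_algebra.
From mathcomp Require Import all_classical all_reals.
Set Implicit Arguments. Unset Strict Implicit. Unset Printing Implicit Defensive.
Import Order.TTheory GRing.Theory Num.Theory.
Local Open Scope ring_scope.
Local Open Scope classical_set_scope.

Section Game.
Context {R : realType}.

Definition Delta (S : finType) (A : {set S}) : set {ffun S -> R} :=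
  [set x | (forall s, 0 <= x s) /\ \sum_(s : S) x s = 1 /\
           (forall s, s \notin A -> x s = 0)].

Definition pure (S : finType) (b : S) : {ffun S -> R} :=
  [ffun s => if s == b then 1 else 0].

Definition payoff1 (S1 S2 : finType) (v : S1 -> S2 -> R)
  (x : {ffun S1 -> R}) (y : {ffun S2 -> R}) : R :=
  \sum_(i : S1) \sum_(j : S2) x i * y j * v i j.

Definition payoff2 (S1 S2 : finType) (v : S1 -> S2 -> R)
  (x : {ffun S1 -> R}) (y : {ffun S2 -> R}) : R := - payoff1 v x y.

Definition exploitability (S1 S2 : finType) (v : S1 -> S2 -> R)
  (x : {ffun S1 -> R}) (y : {ffun S2 -> R}) : R :=
  sup [set payoff1 v x' y | x' in Delta [set: S1]] +
  sup [set payoff2 v x y' | y' in Delta [set: S2]].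

End Game.

(* Main.v *)
Require Import Defs.
From HB Require Import structures.
From mathcomp Require Import all_boot all_order all_algebra.
From mathcomp Require Import all_classical all_reals.
From mathcomp Require Import lra.
Import Order.TTheory GRing.Theory Num.Theory.
Local Open Scope ring_scope.
Local Open Scope classical_set_scope.
Set Implicit Arguments.

Lemma Delta_le1 (R : realType) (S : finType) (A : {set S}) (x : {ffun S -> R}) s :
  Delta A x -> 0 <= x s <= 1.
Proof.
case=> [x0 [x1 _]]; rewrite x0 /= -x1 (bigD1 s) //= lerDl sumr_ge0 // => i _.
Qed.

Lemma payoff_bound (R : realType) (S1 S2 : finType) (v : S1 -> S2 -> R)
  (A : {set S1}) (B : {set S2}) x y :
  Delta A x -> Delta B y ->
  `|payoff1 v x y| <= \sum_i \sum_j `|v i j|.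
Proof.
move=> Dx Dy; rewrite /payoff1.
apply: le_trans (ler_norm_sum _ _ _) _; apply: ler_sum => i _.
apply: le_trans (ler_norm_sum _ _ _) _; apply: ler_sum => j _.
have /andP[xi0 xi1] := Delta_le1 i Dx.
have /andP[yj0 yj1] := Delta_le1 j Dy.
rewrite !normrM (ger0_norm xi0) (ger0_norm yj0).
have h : x i * y j <= 1 by rewrite -(mulr1 1); apply: ler_pM.
by rewrite -[leRHS]mul1r ler_wpM2r.
Qed.

Lemma inf_le_bound (R : realType) (E : set R) M :
  (forall e, E e -> `|e| <= M) -> 0 <= M -> inf E <= M /\ -M <= inf E.
Proof.
move=> hE M0.
have lb : has_lbound E.
  by exists (-M) => z /hE; rewrite ler_norml => /andP[].
case: (pselect (E !=set0)) => [[e Ee]|E0].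
  split.
    apply: le_trans (ge_inf lb Ee) _.
    by apply: le_trans (hE _ Ee); exact: ler_norm.
  by apply: lb_le_inf; [exists e | move=> z /hE; rewrite ler_norml => /andP[]].
have -> : E = set0 by apply/seteqP; split=> z Ez //; exfalso; apply: E0; exists z.
by rewrite inf0; split => //; rewrite oppr_le0.
Qed.

Lemma inf_le_M (R : realType) (E : set R) (M : R) :
  (forall e, E e -> `|e| <= M) -> 0 <= M -> inf E <= M.
Proof. by move=> h M0; case: (@inf_le_bound _ _ _ h M0). Qed.

Unset Implicit Arguments.
Theorem proposition4 (R : realType) (S1 S2 : finType) (v : S1 -> S2 -> R)
  (eps : R) (heps : 0 <= eps)
  (P1 : nat -> {set S1}) (P2 : nat -> {set S2})
  (pi1 : nat -> {ffun S1 -> R}) (pi2 : nat -> {ffun S2 -> R})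
  (b1 : nat -> S1) (b2 : nat -> S2)
  (hP10 : (0 < #|P1 0%N|)%N) (hP20 : (0 < #|P2 0%N|)%N)
  (hpi1 : forall t, Delta (P1 t) (pi1 t))
  (hpi2 : forall t, Delta (P2 t) (pi2 t))
  (hb1 : forall t, forall x, Delta [set: S1] x ->
           payoff1 v x (pi2 t) <= payoff1 v (pure (b1 t)) (pi2 t))
  (hb2 : forall t, forall y, Delta [set: S2] y ->
           payoff2 v (pi1 t) y <= payoff2 v (pi1 t) (pure (b2 t)))
  (hP1 : forall t, P1 t.+1 = b1 t |: P1 t)
  (hP2 : forall t, P2 t.+1 = b2 t |: P2 t)
  (heps1 : forall t,
     inf [set payoff1 v (pi1 t) y | y in Delta [set: S2]] >=
     sup [set inf [set payoff1 v x y | y in Delta [set: S2]]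
           | x in Delta (P1 t)] - eps)
  (heps2 : forall t,
     inf [set payoff2 v x (pi2 t) | x in Delta [set: S1]] >=
     sup [set inf [set payoff2 v x y | x in Delta [set: S1]]
           | y in Delta (P2 t)] - eps) :
  forall t, exploitability v (pi1 t.+1) (pi2 t.+1) <=
            exploitability v (pi1 t) (pi2 t) + 2 * eps.
Proof.
move=> t.
set M := \sum_i \sum_j `|v i j|.
have M0 : 0 <= M by apply: sumr_ge0 => i _; apply: sumr_ge0 => j _.
have mono1 : forall x : {ffun S1 -> R}, Delta (P1 t) x -> Delta (P1 t.+1) x.
  move=> x [a [b c]]; split=> //; split=> // s; rewrite hP1 finset.in_setU negb_or.
  by case/andP => _; exact: c.
have mono2 : forall x : {ffun S2 -> R}, Delta (P2 t) x -> Delta (P2 t.+1) x.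
  move=> x [a [b c]]; split=> //; split=> // s; rewrite hP2 finset.in_setU negb_or.
  by case/andP => _; exact: c.
have C1 : inf [set payoff1 v (pi1 t) y | y in Delta [set: S2]] - eps <=
          inf [set payoff1 v (pi1 t.+1) y | y in Delta [set: S2]].
  apply: le_trans (heps1 t.+1); rewrite lerD2r.
  apply: ub_le_sup; last by exists (pi1 t) => //; apply: mono1.
  exists M => _ [x Dx <-].
  apply: inf_le_M M0 => _ [y Dy <-].
  exact: payoff_bound Dx Dy.
have C2 : inf [set payoff2 v x (pi2 t) | x in Delta [set: S1]] - eps <=
          inf [set payoff2 v x (pi2 t.+1) | x in Delta [set: S1]].
  apply: le_trans (heps2 t.+1); rewrite lerD2r.
  apply: ub_le_sup; last by exists (pi2 t) => //; apply: mono2.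
  exists M => _ [y Dy <-].
  apply: inf_le_M M0 => _ [x Dx <-].
  by rewrite /payoff2 normrN; exact: payoff_bound Dx Dy.
have E : forall s, exploitability v (pi1 s) (pi2 s) =
   - inf [set payoff2 v x (pi2 s) | x in Delta [set: S1]]
   - inf [set payoff1 v (pi1 s) y | y in Delta [set: S2]].
  move=> s; rewrite /exploitability /inf !opprK; congr (sup _ + sup _).
    apply/seteqP; split=> z.
      by case=> x Dx <-; exists (payoff2 v x (pi2 s)); [exists x | rewrite /payoff2 opprK].
    by case=> _ [x Dx <-] <-; exists x; rewrite // /payoff2 opprK.
  apply/seteqP; split=> z.
    by case=> y Dy <-; exists (payoff1 v (pi1 s) y); [exists y|].
  by case=> _ [y Dy <-] <-; exists y.
rewrite !E; lra.
Qed.
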